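(* Let $(X,\Sigma)$ be a measurable space and $\boldsymbol{\mu}=(\mu_t)_{t\ge0}$ a family of monotone measures on $\Sigma$ such that $\mu_t$ is continuous from below for every $t>0$. For $t\ge0$ and $E\in\Sigma\setminus\{\emptyset\}$ define $\mathsf{A}_t(f|E)=\sup\{a\in[0,\infty)\colon \{x\in E\colon f(x)<a\}\in\mathcal{N}_{\mu_t}\}$ for $f\in\mathbf{F}$, and $\mathsf{A}_t(\cdot|\emptyset)=\infty$. Then for every $t>0$ and every $f\in\mathbf{F}\setminus\{0_X\}$, $$\sup\{\mu_t(E)\colon \mathsf{A}_t(f|E)\ge t,\ E\in\Sigma\}=\mu_t(\{x\in X\colon f(x)\ge t\}).$$
   Context: $0_X$ is the zero function on $X$. $\mathbf{F}$ denotes the set of all $\Sigma$-measurable, nonnegative, bounded functions $f\colon X\to[0,\infty)$. A monotone measure is a map $\mu\colon\Sigma\to[0,\infty]$ with $\mu(B)\le\mu(C)$ whenever $B\subseteq C$, $\mu(\emptyset)=0$ and $\mu(X)>0$; it is continuous from below if $\mu(\bigcup_n E_n)=\lim_n\mu(E_n)$ for every nondecreasing sequence $E_1\subseteq E_2\subseteq\cdots$ in $\Sigma$. For a monotone measure $\mu$, $\mathcal{N}_\mu$ is the set of null sets: $N\in\mathcal{N}_\mu$ iff $N\in\Sigma$ and $\mu(E\cup N)=\mu(E)$ for every $E\in\Sigma$. Thus $\mathsf{A}_t(f|E)$ is the essential infimum of $f$ on $E$ with respect to $\mu_t$. *)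

(* Defs.v *)
From HB Require Import structures.
From mathcomp Require Import all_boot all_order all_algebra.
From mathcomp Require Import all_classical all_reals all_analysis.
Set Implicit Arguments. Unset Strict Implicit. Unset Printing Implicit Defensive.
Import Order.TTheory GRing.Theory Num.Theory.
Local Open Scope classical_set_scope.
Local Open Scope ring_scope.

Definition monotone_measure (d : measure_display) (T : measurableType d)
  (R : realType) (mu : set T -> \bar R) : Prop :=
  [/\ forall B, measurable B -> (0 <= mu B)%E,
      forall B C, measurable B -> measurable C -> B `<=` C -> (mu B <= mu C)%E,
      mu set0 = 0%E &
      (0 < mu setT)%E].

Definition cont_from_below (d : measure_display) (T : measurableType d)
  (R : realType) (mu : set T -> \bar R) : Prop :=
  forall E : nat -> set T, (forall n, measurable (E n)) ->
    nondecreasing_seq E ->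
    mu (\bigcup_n E n) = limn (fun n => mu (E n)).

Definition null_set (d : measure_display) (T : measurableType d)
  (R : realType) (mu : set T -> \bar R) (N : set T) : Prop :=
  measurable N /\ forall E, measurable E -> mu (E `|` N) = mu E.

Definition A_ess (d : measure_display) (T : measurableType d)
  (R : realType) (mu : set T -> \bar R) (f : T -> R) (E : set T) : \bar R :=
  if E == set0 then +oo%E
  else ereal_sup [set (a%:E) | a in
         [set a : R | 0 <= a /\ null_set mu [set x | E x /\ f x < a]]].

(* Main.v *)
Require Import Defs.
From HB Require Import structures.
From mathcomp Require Import all_boot all_order all_algebra.
From mathcomp Require Import all_classical all_reals all_analysis.
Import Order.TTheory GRing.Theory Num.Theory.
Local Open Scope classical_set_scope.
Local Open Scope ring_scope.

Lemma meas_lt (d : measure_display) (X : measurableType d) (R : realType)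
  (f : X -> R) (fmeas : measurable_fun setT f) (a : R) :
  measurable [set x | f x < a].
Proof.
have -> : [set x | f x < a] = f @^-1` `]-oo, a[.
  by apply/seteqP; split => x /=; rewrite in_itv.
rewrite -(setTI (f @^-1` _)); exact: fmeas measurableT _ (measurable_itv _).
Qed.

Lemma meas_ge (d : measure_display) (X : measurableType d) (R : realType)
  (f : X -> R) (fmeas : measurable_fun setT f) (a : R) :
  measurable [set x | a <= f x].
Proof.
have -> : [set x | a <= f x] = f @^-1` `[a, +oo[.
  by apply/seteqP; split => x /=; rewrite in_itv /= andbT.
rewrite -(setTI (f @^-1` _)); exact: fmeas measurableT _ (measurable_itv _).
Qed.

Lemma null_sub (d : measure_display) (X : measurableType d) (R : realType)
  (m : set X -> \bar R) (hm : monotone_measure m) (N M : set X) :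
  Defs.null_set m N -> measurable M -> M `<=` N -> Defs.null_set m M.
Proof.
move=> [mN hN] mM MN.
case: hm => h0 hle _ _.
split => // E mE.
apply/eqP; rewrite eq_le; apply/andP; split.
  rewrite -(hN E mE); apply: hle; try exact: measurableU.
  by move=> x [?|/MN ?]; [left|right].
apply: hle => //; try exact: measurableU; by move=> x ?; left.
Qed.

Theorem proposition3p20 (d : measure_display) (X : measurableType d)
  (R : realType) (mu : R -> set X -> \bar R)
  (hmono : forall t : R, 0 <= t -> monotone_measure (mu t))
  (hcont : forall t : R, 0 < t -> cont_from_below (mu t))
  (t : R) (ht : 0 < t) (f : X -> R)
  (fmeas : measurable_fun setT f)
  (fge0 : forall x, 0 <= f x)
  (fbd : exists M : R, forall x, f x <= M)
  (fneq0 : f <> (fun _ => 0)) :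
  ereal_sup [set mu t E | E in
     [set E : set X | measurable E /\ (t%:E <= A_ess (mu t) f E)%E]]
  = mu t [set x | t <= f x].
Proof.
have hm := hmono t (ltW ht).
have hc := hcont t ht.
have [h0 hle hset0 _] := hm.
set S := [set x | t <= f x].
have mS : measurable S by exact: meas_ge.
apply/eqP; rewrite eq_le; apply/andP; split; last first.
  apply: ereal_sup_ubound; exists S => //; split => //.
  rewrite /A_ess; case: ifP => _; first exact: leey.
  apply: ereal_sup_ubound; exists t => //; split; first exact: ltW.
  have -> : [set x | S x /\ f x < t] = set0.
    by apply/seteqP; split => x //= [] tx; rewrite ltNge tx.
  by split => // E _; rewrite setU0.
apply/ereal_supP => _ [E [mE hA] <-].
case: (eqVneq E set0) => [->|E0].
  by rewrite hset0; apply: h0.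
move: hA; rewrite /A_ess (negbTE E0) => hA.
pose N n := E `&` [set x | f x < t - n.+1%:R^-1].
have mN n : measurable (N n) by apply: measurableI => //; exact: meas_lt.
have nN n : Defs.null_set (mu t) (N n).
  have : ((t - n.+1%:R^-1)%R%:E < ereal_sup [set a%:E | a in
      [set a : R | (0 <= a)%R /\ Defs.null_set (mu t) [set x | E x /\ (f x < a)%R]]])%E.
    apply: lt_le_trans hA; rewrite lte_fin ltrBlDr ltrDl invr_gt0.
    by rewrite ltr0Sn.
  move=> /ereal_sup_gt [_ [a [a0 na] <-]]; rewrite lte_fin => lta.
  apply: null_sub na (mN n) _ => //.
  by move=> x [Ex fx]; split => //; apply: lt_trans lta.
pose G n := S `|` N n.
have mG n : measurable (G n) by apply: measurableU.
have Gnd : nondecreasing_seq G.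
  move=> n m nm; apply/subsetPset => x [Sx|[Ex fx]]; [by left|right; split => //].
  apply: lt_le_trans fx _; rewrite lerD2l lerN2 lef_pV2 ?posrE ?ltr0Sn //.
  by rewrite ler_nat ltnS.
have GS n : mu t (G n) = mu t S by case: (nN n) => _ ->.
have hlim := hc G mG Gnd.
have eqG : (fun n => mu t (G n)) = (fun _ => mu t S) by apply: funext.
move: hlim; rewrite eqG lim_cst // => hlim.
rewrite -hlim; apply: hle => //; first exact: bigcupT_measurable.
move=> x Ex; case: (leP t (f x)) => tf; first by exists 0%N => //; left.
have [k hk] := ltr_add_invr (y := f x) (x := t) tf.
exists k => //; right; split => //.
by rewrite /= ltrBrDr.
Qed.
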